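(* Let $A$ be a finite set of lines in $\mathbb{R}^2$. For every open halfplane $S_1$ and every set $S_2\subseteq\mathbb{R}^2$, $$\mu_A(S_1\cup S_2)\le \mu_A(S_1)\,\mu_A(S_2).$$
   Context: For a finite set $A$ of lines in $\mathbb{R}^2$, $V(A)$ denotes the set of all intersection points of pairs of lines of $A$. For $S\subseteq\mathbb{R}^2$, $\mu_A(S)=\max\{|A'| : A'\subseteq A,\ V(A')\subseteq S\}$ (so $\mu_A(S)\ge 1$ whenever $A\neq\emptyset$). *)

(* Defs.v *)
(* The plane R^2 is modelled as R * R for an arbitrary
   real (ordered) field R; the statement is then stated for every
   R : realFieldType (in particular for the real numbers). *)
From HB Require Import structures.
From mathcomp Require Import all_boot all_order all_algebra.
Set Implicit Arguments. Unset Strict Implicit. Unset Printing Implicit Defensive.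
Import Order.TTheory GRing.Theory Num.Theory.
Local Open Scope ring_scope.

(* A line is given by coefficients (a, b, c) with (a, b) <> (0, 0);
   it is the point set { (x, y) | a x + b y = c }. *)
Definition line_nondeg (R : realFieldType) (l : R * R * R) : bool :=
  (l.1.1 != 0) || (l.1.2 != 0).

Definition on_line (R : realFieldType) (l : R * R * R) (p : R * R) : bool :=
  l.1.1 * p.1 + l.1.2 * p.2 == l.2.

(* A finite set of lines: a sequence A of nondegenerate coefficient
   triples whose point sets are pairwise distinct. *)
Definition line_family (R : realFieldType) (A : seq (R * R * R)) : Prop :=
  (forall i : 'I_(size A), line_nondeg (tnth (in_tuple A) i)) /\
  (forall i j : 'I_(size A), i != j ->
     exists p : R * R,
       on_line (tnth (in_tuple A) i) p != on_line (tnth (in_tuple A) j) p).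

(* V(A') subset S, where A' is the set of lines of A indexed by B:
   every intersection point of two distinct lines of A' lies in S. *)
Definition V_sub (R : realFieldType) (A : seq (R * R * R))
    (B : {set 'I_(size A)}) (S : R * R -> Prop) : Prop :=
  forall (i j : 'I_(size A)) (p : R * R), i \in B -> j \in B -> i != j ->
    on_line (tnth (in_tuple A) i) p -> on_line (tnth (in_tuple A) j) p -> S p.

(* is_mu A S m  <->  m = mu_A(S) = max { |A'| : A' subset A, V(A') subset S } *)
Definition is_mu (R : realFieldType) (A : seq (R * R * R))
    (S : R * R -> Prop) (m : nat) : Prop :=
  (exists B : {set 'I_(size A)}, V_sub B S /\ #|B| = m) /\
  (forall B : {set 'I_(size A)}, V_sub B S -> (#|B| <= m)%N).

Definition open_halfplane (R : realFieldType) (S : R * R -> Prop) : Prop :=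
  exists a b c : R, ((a != 0) || (b != 0)) /\
    forall p : R * R, S p <-> c < a * p.1 + b * p.2.

(* Main.v *)
From Stdlib Require Import Ring Field.
Require Import Defs.
From HB Require Import structures.
From mathcomp Require Import all_boot all_order all_algebra.
Import Order.TTheory GRing.Theory Num.Theory.
Local Open Scope ring_scope.

Lemma comb (T : finType) (r : rel T) (B : {set T}) (h w : nat) :
  (forall x, ~~ r x x) -> (forall x y z, r x y -> r y z -> r x z) ->
  (forall C : {set T}, C \subset B ->
     (forall x y, x \in C -> y \in C -> x != y -> r x y || r y x) -> (#|C| <= h)%N) ->
  (forall D : {set T}, D \subset B ->
     (forall x y, x \in D -> y \in D -> ~~ r x y) -> (#|D| <= w)%N) ->
  (#|B| <= h * w)%N.
Proof.
move=> irr tr hC hD.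
pose cs x (C : {set T}) := [&& C \subset B, x \in C,
   [forall y in C, forall z in C, (y != z) ==> r y z || r z y] &
   [forall y in C, (y == x) || r y x]].
pose f x := (\max_(C | cs x C) #|C|)%N.
have F1 : forall x, x \in B -> (0 < f x)%N.
  move=> x xB.
  have csx : cs x [set x].
    rewrite /cs sub1set xB set11 /=; apply/andP; split; apply/forall_inP => y;
      rewrite inE => /eqP ->; last by rewrite eqxx.
    by apply/forall_inP => z; rewrite inE => /eqP ->; rewrite eqxx.
  have := @leq_bigmax_cond _ (cs x) (fun C => #|C|) [set x] csx.
  by rewrite cards1.
have F2 : forall x, (f x <= h)%N.
  move=> x; apply/bigmax_leqP => C /and4P[sCB _ /forall_inP hp _].
  apply: hC sCB _ => y z yC zC yz.
  by move/forall_inP: (hp y yC) => /(_ z zC) /implyP; apply.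
have F3 : forall x y, x \in B -> y \in B -> r x y -> (f x < f y)%N.
  move=> x y xB yB rxy.
  have H : forall C, cs x C -> (#|C|.+1 <= f y)%N.
    move=> C /and4P[sCB xC /forall_inP hp /forall_inP hx].
    have ry : forall u, u \in C -> r u y.
      move=> u uC; case/orP: (hx u uC) => [/eqP-> //|rux]; exact: tr rux rxy.
    have yC : y \notin C.
      by apply/negP => yC; have := irr y; rewrite (ry y yC).
    have cy : cs y (y |: C).
      rewrite /cs subUset sub1set yB sCB setU11 /=; apply/andP; split.
        apply/forall_inP => u; rewrite in_setU1 => /orP[/eqP-> | uC];
          apply/forall_inP => v; rewrite in_setU1 => /orP[/eqP-> | vC];
          apply/implyP => neq.
        - by rewrite eqxx in neq.
        - by rewrite ry // orbT.
        - by rewrite ry.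
        - by move/forall_inP: (hp u uC) => /(_ v vC) /implyP; apply.
      apply/forall_inP => u; rewrite in_setU1 => /orP[-> //|uC].
      by rewrite ry // orbT.
    have := @leq_bigmax_cond _ (cs y) (fun C => #|C|) _ cy.
    by rewrite cardsU1 yC.
  have hle : (f x <= (f y).-1)%N.
    apply/bigmax_leqP => C /H hc.
    by rewrite -ltnS prednK ?F1.
  by rewrite -(prednK (F1 y yB)) ltnS.
have F4 : forall k, (#|[set x in B | f x == k]| <= w)%N.
  move=> k; apply: hD; first by apply/subsetP=> x; rewrite inE => /andP[].
  move=> x y; rewrite !inE => /andP[xB /eqP fx] /andP[yB /eqP fy].
  apply/negP => rxy; have := F3 x y xB yB rxy.
  by rewrite fx fy ltnn.
have F5 : forall n, (#|[set x in B | (f x <= n)%N]| <= n * w)%N.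
  elim=> [|n IH].
    rewrite mul0n leqn0 cards_eq0; apply/eqP/setP => x; rewrite !inE.
    apply/negbTE/negP => /andP[xB]; rewrite leqn0 => /eqP fx0.
    by have := F1 x xB; rewrite fx0.
  apply: (@leq_trans #|[set x in B | (f x <= n)%N] :|: [set x in B | f x == n.+1]|).
    apply: subset_leq_card; apply/subsetP => x; rewrite !inE => /andP[xB].
    by rewrite leq_eqVlt ltnS => /orP[fe|fl]; rewrite xB ?fe ?fl ?orbT.
  apply: leq_trans (leq_card_setU _ _).1 _.
  by rewrite mulSn addnC leq_add ?IH ?F4.
have -> : B = [set x in B | (f x <= h)%N].
  by apply/setP => x; rewrite inE F2 andbT.
exact: F5.
Qed.

Section Geo.
Variable R : realFieldType.
Definition radd (x y : R) : R := x + y.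
Definition rmul (x y : R) : R := x * y.
Definition rsub (x y : R) : R := x - y.
Definition ropp (x : R) : R := - x.
Definition rinv (x : R) : R := x^-1.
Definition rdiv (x y : R) : R := x / y.
Definition r0 : R := 0.
Definition r1 : R := 1.
Lemma RT : @ring_theory R r0 r1 radd rmul rsub ropp (@eq R).
Proof. rewrite /radd /rmul /rsub /ropp /r0 /r1. split=> //=; [exact: add0r|exact: addrC|exact: addrA|exact: mul1r|exact: mulrC|exact: mulrA|exact: mulrDl|exact: subrr]. Qed.
Lemma FT : @field_theory R r0 r1 radd rmul rsub ropp rdiv rinv (@eq R).
Proof. split; first exact: RT.
- by rewrite /r0 /r1; apply/eqP; exact: oner_neq0.
- by [].
- by rewrite /rinv /rmul /r0 /r1 => p /eqP hp; rewrite mulVf.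
Qed.
Add Field Rf : FT.

Lemma W1 (a b c x y z p q : R) :
 rsub (rsub (rmul (rsub (rmul x b) (rmul y a)) (rsub (rmul a q) (rmul b p)))
   (rmul (radd (rmul a x) (rmul b y)) (rsub (radd (rmul a p) (rmul b q)) c)))
   (rsub (rmul (radd (rmul a x) (rmul b y)) c) (rmul (radd (rmul a a) (rmul b b)) z))
 = rmul (ropp (radd (rmul a a) (rmul b b))) (rsub (radd (rmul x p) (rmul y q)) z).
Proof. ring. Qed.

Lemma W2 (D S T u w : R) : D != 0 ->
  rsub w (radd (rdiv T D) (rmul (rdiv S D) u)) = rdiv (rsub (rsub (rmul D w) (rmul S u)) T) D.
Proof. move=> /eqP h. field. exact h. Qed.

Lemma W3 (S T u : R) : S != 0 ->
  rsub u (rdiv (ropp T) S) = rdiv (radd (rmul S u) T) S.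
Proof. move=> /eqP h. field. exact h. Qed.

Lemma W4 (a b x y : R) :
  radd (rmul (rsub (rmul x b) (rmul y a)) (rsub (rmul x b) (rmul y a)))
       (rmul (radd (rmul a x) (rmul b y)) (radd (rmul a x) (rmul b y)))
  = rmul (radd (rmul a a) (rmul b b)) (radd (rmul x x) (rmul y y)).
Proof. ring. Qed.

Lemma W5 (t1 s1 t2 s2 u : R) :
  rsub (rmul (rsub s1 s2) u) (rsub t2 t1) = rsub (radd t1 (rmul s1 u)) (radd t2 (rmul s2 u)).
Proof. ring. Qed.

Lemma lin (t1 s1 t2 s2 u : R) : t1 + s1 * u = t2 + s2 * u -> (s1 - s2) * u = t2 - t1.
Proof.
move=> E; apply/eqP; rewrite -subr_eq0.
have := W5 t1 s1 t2 s2 u; rewrite /rsub /radd /rmul => ->.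
by rewrite E subrr.
Qed.

Variables a b c : R.
Definition nn := a * a + b * b.
Definition Dl (l : R * R * R) := l.1.1 * b - l.1.2 * a.
Definition Sl (l : R * R * R) := a * l.1.1 + b * l.1.2.
Definition Tl (l : R * R * R) := Sl l * c - nn * l.2.
Definition uu (p : R * R) := a * p.1 + b * p.2 - c.
Definition ww (p : R * R) := a * p.2 - b * p.1.
Definition tt l := Tl l / Dl l.
Definition ss l := Sl l / Dl l.
Definition kk l := - Tl l / Sl l.

Lemma key l p : Dl l * ww p - Sl l * uu p - Tl l
   = - nn * (l.1.1 * p.1 + l.1.2 * p.2 - l.2).
Proof.
case: l => [[x y] z]; case: p => [p q]; rewrite /Dl /Sl /Tl /uu /ww /nn /=.
exact: W1.
Qed.

Lemma on_key l p : nn != 0 -> on_line l p = (Dl l * ww p - Sl l * uu p - Tl l == 0).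
Proof.
move=> nz; rewrite key mulf_eq0 oppr_eq0 (negbTE nz) /=.
by rewrite /on_line subr_eq0.
Qed.

Lemma on_normal l p : nn != 0 -> Dl l != 0 -> on_line l p = (ww p == tt l + ss l * uu p).
Proof.
move=> nz hD; rewrite on_key // -[RHS]subr_eq0 /tt /ss.
have := W2 (Dl l) (Sl l) (Tl l) (uu p) (ww p) hD; rewrite /rsub /radd /rdiv /rmul => ->.
by rewrite mulf_eq0 invr_eq0 (negbTE hD) orbF.
Qed.

Lemma on_par l p : nn != 0 -> Dl l = 0 -> Sl l != 0 -> on_line l p = (uu p == kk l).
Proof.
move=> nz hD hS; rewrite on_key // hD mul0r sub0r -opprD oppr_eq0.
rewrite -[RHS]subr_eq0 /kk.
have := W3 (Sl l) (Tl l) (uu p) hS; rewrite /rsub /radd /rdiv /rmul /ropp => ->.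
by rewrite mulf_eq0 invr_eq0 (negbTE hS) orbF.
Qed.

Lemma sq2_eq0 (x y : R) : (x * x + y * y == 0) = (x == 0) && (y == 0).
Proof.
by rewrite (paddr_eq0 (sqr_ge0 x) (sqr_ge0 y)) !mulf_eq0 !orbb.
Qed.

Lemma Snz l : nn != 0 -> line_nondeg l -> Dl l = 0 -> Sl l != 0.
Proof.
move=> nz nd hD; apply/negP => /eqP hS.
have E : Dl l * Dl l + Sl l * Sl l = nn * (l.1.1 * l.1.1 + l.1.2 * l.1.2).
  by case: l nd hD hS => [[x y] z] _ _ _; rewrite /Dl /Sl /nn /=; exact: W4.
rewrite hD hS mul0r addr0 in E.
move: E => /esym /eqP; rewrite mulf_eq0 (negbTE nz) /= sq2_eq0.
by case/andP => /eqP h1 /eqP h2; move: nd; rewrite /line_nondeg h1 h2 eqxx.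
Qed.

Definition rl (l1 l2 : R * R * R) : bool :=
  (Dl l2 != 0) && (if Dl l1 != 0 then (tt l1 < tt l2) && (ss l2 < ss l1) else 0 < kk l1).

Lemma rl_irr l : ~~ rl l l.
Proof. by rewrite /rl; case: (Dl l != 0) => //=; rewrite ltxx. Qed.

Lemma rl_trans l1 l2 l3 : rl l1 l2 -> rl l2 l3 -> rl l1 l3.
Proof.
rewrite /rl => /andP[h2 h12] /andP[h3 h23]; rewrite h3 /=; rewrite h2 in h23.
case/andP: h23 => ht hs; case: (Dl l1 != 0) h12 => // /andP[ht' hs'].
by rewrite (lt_trans ht' ht) (lt_trans hs hs').
Qed.

Lemma pos l1 l2 p : nn != 0 -> line_nondeg l1 -> rl l1 l2 ->
  on_line l1 p -> on_line l2 p -> 0 < uu p.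
Proof.
move=> nz nd /andP[h2]; case: ifP => h1.
  case/andP=> ht hs; rewrite (on_normal _ p nz h1) (on_normal _ p nz h2) => /eqP e1 /eqP e2.
  have E := lin _ _ _ _ _ (etrans (esym e1) e2).
  have hp : 0 < ss l1 - ss l2 by rewrite subr_gt0.
  by rewrite -(pmulr_rgt0 (uu p) hp) E subr_gt0.
move=> hk; have hD1 : Dl l1 = 0 by apply/eqP; rewrite -[_ == _]negbK h1.
by rewrite (on_par _ p nz hD1 (Snz _ nz nd hD1)) => /eqP -> _.
Qed.

Lemma nonpos l1 l2 p : nn != 0 -> line_nondeg l1 -> line_nondeg l2 ->
  (exists q, on_line l1 q != on_line l2 q) -> ~~ rl l1 l2 -> ~~ rl l2 l1 ->
  on_line l1 p -> on_line l2 p -> uu p <= 0.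
Proof.
move=> nz nd1 nd2 [q hq] n12 n21.
case h1: (Dl l1 != 0); case h2: (Dl l2 != 0).
- rewrite !on_normal // => /eqP e1 /eqP e2.
  have e : tt l1 + ss l1 * uu p = tt l2 + ss l2 * uu p by rewrite -e1 -e2.
  have E12 := lin _ _ _ _ _ e; have E21 := lin _ _ _ _ _ (esym e).
  rewrite /rl h1 h2 /= in n12 n21.
  case: (ltgtP (ss l1) (ss l2)) => hs.
  + rewrite hs andbT in n21; rewrite leNgt; apply/negP => hu.
    have hh : 0 < ss l2 - ss l1 by rewrite subr_gt0.
    have : 0 < (ss l2 - ss l1) * uu p by rewrite pmulr_rgt0.
    by rewrite E21 subr_gt0 => ht; rewrite ht in n21.
  + rewrite hs andbT in n12; rewrite leNgt; apply/negP => hu.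
    have hh : 0 < ss l1 - ss l2 by rewrite subr_gt0.
    have : 0 < (ss l1 - ss l2) * uu p by rewrite pmulr_rgt0.
    by rewrite E12 subr_gt0 => ht; rewrite ht in n12.
  + rewrite hs subrr mul0r in E12.
    move/eqP: E12; rewrite eq_sym subr_eq0 => /eqP ht.
    by rewrite !on_normal // ht hs eqxx in hq.
- have hD2 : Dl l2 = 0 by apply/eqP; rewrite -[_ == _]negbK h2.
  rewrite /rl h1 h2 /= in n21.
  rewrite (on_par _ p nz hD2 (Snz _ nz nd2 hD2)) => _ /eqP ->.
  by rewrite leNgt.
- have hD1 : Dl l1 = 0 by apply/eqP; rewrite -[_ == _]negbK h1.
  rewrite /rl h1 h2 /= in n12.
  rewrite (on_par _ p nz hD1 (Snz _ nz nd1 hD1)) => /eqP -> _.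
  by rewrite leNgt.
- have hD1 : Dl l1 = 0 by apply/eqP; rewrite -[_ == _]negbK h1.
  have hD2 : Dl l2 = 0 by apply/eqP; rewrite -[_ == _]negbK h2.
  rewrite (on_par _ p nz hD1 (Snz _ nz nd1 hD1)) (on_par _ p nz hD2 (Snz _ nz nd2 hD2)).
  move=> /eqP e1 /eqP e2; have hk : kk l1 = kk l2 by rewrite -e1 -e2.
  by rewrite (on_par _ q nz hD1 (Snz _ nz nd1 hD1)) (on_par _ q nz hD2 (Snz _ nz nd2 hD2)) hk eqxx in hq.
Qed.

End Geo.

Theorem lemma1 (R : realFieldType) (A : seq (R * R * R))
    (S1 S2 : R * R -> Prop) (m1 m2 m : nat) :
  line_family A -> open_halfplane S1 ->
  is_mu A S1 m1 -> is_mu A S2 m2 ->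
  is_mu A (fun p => S1 p \/ S2 p) m ->
  (m <= m1 * m2)%N.
Proof.
move=> [ndA dA] [a [b [c [ab hS1]]]] [_ hm1] [_ hm2] [[B0 [VB0 cB0]] _].
have nz : nn _ a b != 0.
  rewrite /nn sq2_eq0; apply/negP => /andP[/eqP a0 /eqP b0].
  by rewrite a0 b0 eqxx in ab.
rewrite -cB0.
pose L i := tnth (in_tuple A) i.
apply: (@comb _ (fun i j => rl _ a b c (L i) (L j)) B0 m1 m2).
- by move=> i; exact: rl_irr.
- by move=> i j k; exact: rl_trans.
- move=> C sub hC; apply: hm1 => i j p iC jC ij oi oj.
  apply/(hS1 p); rewrite -subr_gt0.
  case/orP: (hC i j iC jC ij) => r.
    exact: (pos _ a b c _ _ _ nz (ndA i) r oi oj).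
  exact: (pos _ a b c _ _ _ nz (ndA j) r oj oi).
- move=> D sub hD; apply: hm2 => i j p iD jD ij oi oj.
  have [h1|//] := VB0 i j p (subsetP sub _ iD) (subsetP sub _ jD) ij oi oj.
  have := nonpos _ a b c _ _ _ nz (ndA i) (ndA j) (dA i j ij)
     (hD i j iD jD) (hD j i jD iD) oi oj.
  move/hS1: h1; rewrite -subr_gt0 => h1.
  by rewrite /uu leNgt h1.
Qed.
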